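(* Let $G=(V,E)$ be a non-separable graph with $|V|\ge 3$ and let $x\in V$ with $d(x)\le 3$. If $G-e$ is non-separable for every edge $e$ incident with $x$, then $G/e'$ is non-separable for every edge $e'$ incident with $x$.
   Context: Graphs are finite, undirected, possibly with loops and parallel edges; $d(x)$ counts each loop at $x$ twice. A graph is non-separable if it is connected, has no cut-vertex, and either has no loops or has exactly one vertex and one edge. $G/e$ denotes contraction of the edge $e$. *)

(* Defs.v *)
From mathcomp Require Import all_boot.
Set Implicit Arguments. Unset Strict Implicit. Unset Printing Implicit Defensive.

(* A multigraph whose vertices are drawn from a finType V and edges from a
   finType E; each edge has an (unordered, represented as a pair) set of
   two endpoints; a loop has both endpoints equal. *)
Record mgraph (V E : finType) := MGraph {
  verts : {set V};
  edges : {set E};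
  ends  : E -> V * V }.

Section Graphs.
Variables V E : finType.
Implicit Types (G : mgraph V E) (x y : V) (e : E).

Definition wf_graph G :=
  forall e, e \in edges G -> ((ends G e).1 \in verts G) && ((ends G e).2 \in verts G).

Definition incident G x e := ((ends G e).1 == x) || ((ends G e).2 == x).

Definition is_loop G e := (ends G e).1 == (ends G e).2.

(* degree: each loop at x counted twice *)
Definition deg G x : nat :=
  \sum_(e in edges G) (((ends G e).1 == x) + ((ends G e).2 == x)).

Definition adj_in G (S : {set V}) : rel V := fun x y =>
  [&& x \in S, y \in S &
      [exists e in edges G,
        ((ends G e == (x, y)) || (ends G e == (y, x)))]].

Definition connected G :=
  (verts G != set0) /\
  forall x y, x \in verts G -> y \in verts G -> connect (adj_in G (verts G)) x y.

(* v is a cut-vertex: deleting v increases the number of components, i.e.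
   two other vertices joined in G are no longer joined in G - v *)
Definition cut_vertex G v :=
  v \in verts G /\
  exists x y, [/\ x \in verts G :\ v, y \in verts G :\ v,
     connect (adj_in G (verts G)) x y &
     ~~ connect (adj_in G (verts G :\ v)) x y].

Definition loopless G := forall e, e \in edges G -> ~~ is_loop G e.

Definition nonseparable G :=
  [/\ connected G, (forall v, ~ cut_vertex G v) &
      (loopless G \/ (#|verts G| = 1 /\ #|edges G| = 1))].

Definition delete_edge G e : mgraph V E :=
  MGraph (verts G) (edges G :\ e) (ends G).

(* G / e : for a non-loop e = uw, identify w into u and remove e;
   contracting a loop is deleting it *)
Definition contract_edge G e : mgraph V E :=
  let u := (ends G e).1 in
  let w := (ends G e).2 in
  if u == w then delete_edge G e else
  let m z := if z == w then u else z in
  MGraph (verts G :\ w) (edges G :\ e)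
         (fun f => (m (ends G f).1, m (ends G f).2)).

End Graphs.

(* Main.v *)
Require Import Defs.
From mathcomp Require Import all_boot.
From mathcomp Require Import zify.

Section Helpers.
Set Implicit Arguments. Unset Strict Implicit.
Variables V E : finType.
Implicit Types (G : mgraph V E) (x y : V) (e : E).

Definition oth G x e := if (ends G e).1 == x then (ends G e).2 else (ends G e).1.

Lemma inc_ends G x g : incident G x g ->
  ends G g = (x, oth G x g) \/ ends G g = (oth G x g, x).
Proof.
rewrite /incident /oth; case: (ends G g) => p q /=.
case: (eqVneq p x) => [->|px] /=; first by left.
by move/eqP->; right.
Qed.

Lemma ends_inc G x t g : (ends G g == (x,t)) || (ends G g == (t,x)) ->
  incident G x g /\ oth G x g = t.
Proof.
rewrite /incident /oth; case: (ends G g) => p q /=.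
case/orP => /eqP [-> ->]; rewrite eqxx ?orbT; split => //.
by case: eqP.
Qed.

Lemma ep_sol (p : V * V) y z s t : (p == (y,z)) || (p == (z,y)) ->
  p = (s,t) \/ p = (t,s) -> (y = s /\ z = t) \/ (y = t /\ z = s).
Proof.
by case/orP => /eqP -> [] [-> ->]; auto.
Qed.

Lemma connect_map (T T' : finType) (r : rel T) (r' : rel T') (f : T -> T') :
  (forall a b, r a b -> connect r' (f a) (f b)) ->
  forall p q, connect r p q -> connect r' (f p) (f q).
Proof.
move=> H p q /connectP [s]; elim: s p => [|z s IH] p /=; first by move=> _ ->.
case/andP => rpz ps lq.
exact: connect_trans (H _ _ rpz) (IH _ ps lq).
Qed.

Lemma first_step (T : finType) (r : rel T) p q :
  connect r p q -> p != q -> exists t, r p t.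
Proof.
case/connectP => [[|t s]] /=; first by move=> _ ->; rewrite eqxx.
by case/andP=> rt _ _ _; exists t.
Qed.

Lemma not_cut G v p q : nonseparable G -> v \in verts G ->
  p \in verts G :\ v -> q \in verts G :\ v ->
  connect (adj_in G (verts G :\ v)) p q.
Proof.
case=> [[_ Hc] Hnc _] vV pV qV.
apply/negPn/negP => Hn; apply: (Hnc v); split=> //.
exists p, q; split=> //.
apply: Hc; [by case/setD1P: pV | by case/setD1P: qV].
Qed.

Lemma ns_loopless G : nonseparable G -> 3 <= #|verts G| -> loopless G.
Proof. by case=> _ _ [//|[h1 _]]; rewrite h1. Qed.

Lemma deg4 G x e1 e2 e3 e4 :
  e1 \in edges G -> e2 \in edges G -> e3 \in edges G -> e4 \in edges G ->
  incident G x e1 -> incident G x e2 -> incident G x e3 -> incident G x e4 ->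
  e2 != e1 -> e3 != e1 -> e3 != e2 -> e4 != e1 -> e4 != e2 -> e4 != e3 ->
  4 <= deg G x.
Proof.
move=> h1 h2 h3 h4 i1 i2 i3 i4 n21 n31 n32 n41 n42 n43.
apply: (@leq_trans (\sum_(e in edges G) (incident G x e : nat))); last first.
  by apply: leq_sum => e _; rewrite /incident; case: (_.1 == x); case: (_.2 == x).
have c2 : (e2 \in edges G) && (e2 != e1) by rewrite h2 n21.
have c3 : ((e3 \in edges G) && (e3 != e1)) && (e3 != e2) by rewrite h3 n31 n32.
have c4 : (((e4 \in edges G) && (e4 != e1)) && (e4 != e2)) && (e4 != e3)
  by rewrite h4 n41 n42 n43.
rewrite (bigD1 e1 h1) (bigD1 e2 c2) (bigD1 e3 c3) (bigD1 e4 c4) i1 i2 i3 i4 /=.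
by rewrite !add1n.
Qed.

Lemma two_nbrs G x : wf_graph G -> nonseparable G -> 3 <= #|verts G| ->
  x \in verts G ->
  exists f1 f2, [/\ f1 \in edges G, f2 \in edges G, incident G x f1,
                    incident G x f2 & oth G x f1 != oth G x f2].
Proof.
move=> wf ns h3 xv.
have ll := ns_loopless ns h3.
have [[_ Hc] _ _] := ns.
have : 0 < #|verts G :\ x|.
  by move: h3; rewrite (cardsD1 x (verts G)) xv /=; lia.
case/card_gt0P => y; rewrite in_setD1 => /andP[yx yv].
have xy : x != y by rewrite eq_sym.
have [t] := first_step (Hc _ _ xv yv) xy.
case/and3P => _ tv /existsP [f1 /andP [f1e hf1]].
have [i1 o1] := ends_inc hf1.
have tx : t != x.
  apply/negP => /eqP tx; move: (ll f1 f1e); rewrite /is_loop.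
  by case/orP: hf1 => /eqP ->; rewrite tx /= eqxx.
have : 0 < #|(verts G :\ x) :\ t|.
  move: h3; rewrite (cardsD1 x (verts G)) xv (cardsD1 t (verts G :\ x)).
  rewrite in_setD1 tx tv /=; lia.
case/card_gt0P => z; rewrite !in_setD1 => /and3P [zt zx zv].
have xt : x \in verts G :\ t by rewrite in_setD1 eq_sym tx xv.
have zt' : z \in verts G :\ t by rewrite in_setD1 zt zv.
have xz : x != z by rewrite eq_sym.
have [t'] := first_step (not_cut ns tv xt zt') xz.
case/and3P => _ t'v /existsP [f2 /andP [f2e hf2]].
have [i2 o2] := ends_inc hf2.
exists f1, f2; split => //.
rewrite o1 o2; move: t'v; rewrite in_setD1 => /andP[h _].
by rewrite eq_sym.
Qed.

Definition mm G e z := if z == (ends G e).2 then (ends G e).1 else z.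

Lemma contractE G e : ~~ is_loop G e ->
  contract_edge G e = MGraph (verts G :\ (ends G e).2) (edges G :\ e)
     (fun f => (mm G e (ends G f).1, mm G e (ends G f).2)).
Proof. by rewrite /contract_edge /is_loop => /negbTE ->. Qed.

Lemma step_contr G e (A B : {set V}) : ~~ is_loop G e ->
  (forall y, y \in A -> mm G e y \in B) ->
  forall y z, adj_in G A y z ->
  connect (adj_in (contract_edge G e) B) (mm G e y) (mm G e z).
Proof.
move=> nl HAB y z /and3P [yA zA /existsP [g /andP [ge hg]]].
case: (eqVneq g e) => [Eg|gne].
  subst g.
  have -> : mm G e y = mm G e z.
    move: nl; rewrite /mm /is_loop.
    case/orP: hg => /eqP -> /= nl; rewrite eqxx.
      by case: ifP.
    by case: ifP.
  exact: connect0.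
rewrite contractE //; apply: connect1.
rewrite /adj_in /= !HAB //=; apply/existsP; exists g.
rewrite in_setD1 gne ge /=.
by case/orP: hg => /eqP ->; rewrite eqxx ?orbT.
Qed.

End Helpers.

Theorem lemma4p1 (V E : finType) (G : mgraph V E) (x : V) :
  wf_graph G -> nonseparable G -> 3 <= #|verts G| ->
  x \in verts G -> deg G x <= 3 ->
  (forall e, e \in edges G -> incident G x e -> nonseparable (delete_edge G e)) ->
  forall e', e' \in edges G -> incident G x e' -> nonseparable (contract_edge G e').
Proof.
move=> wf ns h3 xv hdeg hdel e' e'e ie'.
have ll := ns_loopless ns h3.
have [[_ Hc] Hnc _] := ns.
have wfd f : wf_graph (delete_edge G f).
  by move=> g; rewrite /= in_setD1 => /andP[_]; apply: wf.
set a := oth G x e'.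
have [f1 [f2 [f1e f2e i1 i2 o12]]] := two_nbrs (wfd e') (hdel e' e'e ie') h3 xv.
move: f1e f2e; rewrite /= !in_setD1 => /andP[f1e' f1e] /andP[f2e' f2e].
change (is_true (incident G x f1)) in i1. change (is_true (incident G x f2)) in i2.
change (is_true (oth G x f1 != oth G x f2)) in o12.
have f12 : f1 != f2.
  apply/eqP => Ef. move: o12. rewrite Ef. rewrite eqxx. done.
have only3 g : g \in edges G -> incident G x g -> [|| g == e', g == f1 | g == f2].
  move=> ge ig; apply/negPn/negP; rewrite !negb_or => /and3P [n1 n2 n3].
  have f21 : f2 != f1 by rewrite eq_sym.
  have h4 := deg4 e'e f1e f2e ge ie' i1 i2 ig f1e' f2e' f21 n1 n2 n3.
  by have := leq_trans h4 hdeg.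
have noone h : h \in edges G -> incident G x h ->
    ~ (forall g, g \in edges G -> incident G x g -> g != h -> oth G x g = a).
  move=> he ih Hall.
  have [g1 [g2 [g1e g2e j1 j2 o]]] := two_nbrs (wfd h) (hdel h he ih) h3 xv.
  move: g1e g2e; rewrite /= !in_setD1 => /andP[g1h g1e] /andP[g2h g2e].
  change (is_true (oth G x g1 != oth G x g2)) in o.
  by move: o; rewrite (Hall g1 g1e j1 g1h) (Hall g2 g2e j2 g2h) eqxx.
have ob : oth G x f1 != a.
  apply/negP => /eqP ob; apply: (noone f2 f2e i2) => g ge ig gf2.
  by case/or3P: (only3 g ge ig) => /eqP Eg; subst g; rewrite ?eqxx in gf2.
have oc : oth G x f2 != a.
  apply/negP => /eqP oc; apply: (noone f1 f1e i1) => g ge ig gf1.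
  by case/or3P: (only3 g ge ig) => /eqP Eg; subst g; rewrite ?eqxx in gf1.
have ea : ends G e' = (x,a) \/ ends G e' = (a,x) := inc_ends ie'.
have av : a \in verts G.
  have /andP[h1 h2] := wf e' e'e.
  by case: ea => Ee; rewrite Ee in h1 h2.
set u := (ends G e').1. set w := (ends G e').2.
have uwxa : (u = x /\ w = a) \/ (u = a /\ w = x).
  by rewrite /u /w; case: ea => ->; [left|right].
have uw : u != w := ll e' e'e.
have /andP[uv wv] := wf e' e'e.
have nuw y : y != x -> y != a -> (y != u) && (y != w).
  by move=> h1 h2; case: uwxa => [[-> ->]|[-> ->]]; rewrite h1 h2.
have nxa y : y != u -> y != w -> (y != x) && (y != a).
  by case: uwxa => [[-> ->]|[-> ->]] => h1 h2; rewrite h1 h2.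
have mmE y : mm G e' y = if y == w then u else y by [].
have mmid y : y != w -> mm G e' y = y by rewrite mmE => /negbTE ->.
have vH : verts (contract_edge G e') = verts G :\ w by rewrite contractE.
have eH : edges (contract_edge G e') = edges G :\ e' by rewrite contractE.
have endsH g : ends (contract_edge G e') g =
   (mm G e' (ends G g).1, mm G e' (ends G g).2) by rewrite contractE.
split.
- split.
  + rewrite vH; apply/set0Pn; exists u; by rewrite in_setD1 uw uv.
  + move=> p q; rewrite vH !in_setD1 => /andP[pw pv] /andP[qw qv].
    have HAB : forall y, y \in verts G -> mm G e' y \in verts G :\ w.
      move=> y yv; rewrite mmE; case: (eqVneq y w) => [_|yw];
        by rewrite in_setD1 ?uw ?uv ?yw ?yv.
    rewrite -(mmid p pw) -(mmid q qw).
    exact: (connect_map (step_contr (ll e' e'e) HAB)) (Hc p q pv qv).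
- move=> v [vV [p [q [pS qS _ ncon]]]]; apply: (negP ncon).
  move: vV pS qS; rewrite vH !in_setD1 => /andP[vw vv] /and3P[pv' pw pv] /and3P[qv' qw qv].
  case: (eqVneq v u) => [Evu|vu].
  + subst v.
    have /andP[px pa] := nxa p pv' pw.
    have /andP[qx qa] := nxa q qv' qw.
    have pA : p \in verts G :\ a by rewrite in_setD1 pa pv.
    have qA : q \in verts G :\ a by rewrite in_setD1 qa qv.
    have Hcon := not_cut (hdel f1 f1e i1) av pA qA.
    set c := oth G x f2.
    have ec : ends G f2 = (x,c) \/ ends G f2 = (c,x) := inc_ends i2.
    have pi : forall y, y != x -> (if y == x then c else y) = y.
      by move=> y /negbTE ->.
    rewrite -(pi p px) -(pi q qx).
    apply: (connect_map (f := fun y => if y == x then c else y) _ Hcon) => y z.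
    case/and3P => yA zA /existsP [g /andP [ge hg]].
    move: yA zA ge; rewrite /= !in_setD1 => /andP[ya yv] /andP[za zv] /andP[gf1 ge].
    case: (boolP ((y == x) || (z == x))) => [yzx|].
      have ig : incident G x g.
        rewrite /incident; case/orP: hg => /eqP -> /=;
          by case/orP: yzx => /eqP ->; rewrite eqxx ?orbT.
      case/or3P: (only3 g ge ig) => /eqP Eg; subst g.
      * case: (ep_sol hg ea) => [[_ Ez]|[Ey _]].
          by rewrite Ez eqxx in za.
        by rewrite Ey eqxx in ya.
      * by rewrite eqxx in gf1.
      * by case: (ep_sol hg ec) => [[-> ->]|[-> ->]]; rewrite eqxx if_same; exact: connect0.
    rewrite negb_or => /andP[yx zx]; rewrite !pi //; apply: connect1.
    have gne : g != e'.
      apply/eqP => Eg; subst g; case: (ep_sol hg ea) => [[Ey _]|[_ Ez]].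
        by rewrite Ey eqxx in yx.
      by rewrite Ez eqxx in zx.
    have /andP[yu yw] := nuw y yx ya.
    have /andP[zu zw] := nuw z zx za.
    rewrite /adj_in !in_setD1 yu yw yv zu zw zv /=.
    apply/existsP; exists g; rewrite eH in_setD1 gne ge endsH /=.
    by case/orP: hg => /eqP -> /=; rewrite (mmid y yw) (mmid z zw) eqxx ?orbT.
  + have pV : p \in verts G :\ v by rewrite in_setD1 pv' pv.
    have qV : q \in verts G :\ v by rewrite in_setD1 qv' qv.
    have Hcon := not_cut ns vv pV qV.
    have uv' : u != v by rewrite eq_sym.
    have HAB : forall y, y \in verts G :\ v -> mm G e' y \in (verts G :\ w) :\ v.
      move=> y; rewrite !in_setD1 => /andP[yv' yv]; rewrite mmE.
      by case: (eqVneq y w) => [_|yw]; rewrite ?uv' ?uw ?uv ?yv' ?yw ?yv.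
    rewrite -(mmid p pw) -(mmid q qw).
    exact: (connect_map (step_contr (ll e' e'e) HAB)) Hcon.
- left; move=> g; rewrite eH in_setD1 => /andP[ge' ge]; rewrite /is_loop endsH.
  have := ll g ge; rewrite /is_loop.
  case Eg0: (ends G g) => [y z] /= yz.
  apply/negP => hl.
  have hp : (ends G g == (x,a)) || (ends G g == (a,x)).
    rewrite Eg0; move: hl yz; rewrite !mmE.
    case: (eqVneq y w) => [->|yw]; case: (eqVneq z w) => [->|zw] /= hl yz.
    * by [].
    * move/eqP: hl => <-.
      by case: uwxa => [[-> ->]|[-> ->]]; rewrite eqxx ?orbT.
    * move/eqP: hl => ->.
      by case: uwxa => [[-> ->]|[-> ->]]; rewrite eqxx ?orbT.
    * by rewrite hl in yz.
  have [ig og] := ends_inc hp.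
  case/or3P: (only3 g ge ig) => /eqP Eg; subst g.
  * by move: ge'; rewrite eqxx.
  * by move: ob; rewrite og eqxx.
  * by move: oc; rewrite og eqxx.
Qed.
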